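(* Let $N,K\ge1$, $\mathbf{g},\mathbf{h}_{r,k}\in\mathbb{C}^N$, $h_{d,k}\in\mathbb{C}$, $\sigma^2,\sigma_r^2,P_r,T_{\max}>0$, $E_k>0$ ($k=1,\dots,K$). Put $\mathbf{q}_k=\mathrm{diag}(\mathbf{g}^H)\mathbf{h}_{r,k}$, $\mathbf{G}=\mathrm{diag}(|[\mathbf{g}]_1|^2,\dots,|[\mathbf{g}]_N|^2)$, $\mathbf{H}_{r,k}=\mathrm{diag}(|[\mathbf{h}_{r,k}]_1|^2,\dots,|[\mathbf{h}_{r,k}]_N|^2)$, and $\gamma_k(\mathbf{v})=|h_{d,k}+\mathbf{v}^H\mathbf{q}_k|^2/(\sigma^2+\sigma_r^2\mathbf{v}^H\mathbf{G}\mathbf{v})$ for $\mathbf{v}\in\mathbb{C}^N$. Let $R^*_{\rm TDMA}$ be the optimal value of: maximize $\sum_k\tau_k\log_2(1+p_k\gamma_k(\mathbf{v}_k))$ over $\tau_k,p_k\in\mathbb{R}$, $\mathbf{v}_k\in\mathbb{C}^N$ ($k=1,\dots,K$), subject to $\tau_kp_k\le E_k$, $\sum_k\tau_k\le T_{\max}$, $\tau_k\ge0$, $p_k\ge0$, $p_k\mathbf{v}_k^H\mathbf{H}_{r,k}\mathbf{v}_k+\sigma_r^2\|\mathbf{v}_k\|^2\le P_r$ for all $k$. Let $R^*_{\rm NOMA}$ be the optimal value of: maximize $\tau\log_2(1+\sum_kp_k\gamma_k(\mathbf{v}))$ over $\tau,p_k\in\mathbb{R}$, $\mathbf{v}\in\mathbb{C}^N$,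 subject to $\tau p_k\le E_k$, $\tau\le T_{\max}$, $\tau\ge0$, $p_k\ge0$, $\sum_kp_k\mathbf{v}^H\mathbf{H}_{r,k}\mathbf{v}+\sigma_r^2\|\mathbf{v}\|^2\le P_r$. Let $(\{\breve p_k\},\breve{\mathbf{v}})$ be the optimal solution of the problem: maximize $\sum_k\tau_k\log_2(1+p_k\gamma_k(\mathbf{v}))$ over $\tau_k,p_k\in\mathbb{R}$ and a single $\mathbf{v}\in\mathbb{C}^N$ subject only to $\tau_kp_k\le E_k$, $\sum_k\tau_k\le T_{\max}$, $\tau_k\ge0$, $p_k\ge0$. If $\breve p_k\breve{\mathbf{v}}^H\mathbf{H}_{r,k}\breve{\mathbf{v}}+\sigma_r^2\|\breve{\mathbf{v}}\|^2\le P_r$ for all $k$, then $R^*_{\rm TDMA}\ge R^*_{\rm NOMA}$.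
   Context: $R^*_{\rm TDMA}$ is the optimal sum throughput of active-IRS-aided TDMA uplink with a dedicated IRS reflection/amplification vector $\mathbf{v}_k$ per device slot; $R^*_{\rm NOMA}$ that of NOMA with one shared IRS vector; $E_k$ is device $k$'s energy and $P_r$ the IRS amplification power budget. *)

(* Defs.v *)
From mathcomp Require Import all_boot all_order all_algebra.
From mathcomp Require Import all_classical all_reals all_analysis.
From mathcomp Require Export complex.
Set Implicit Arguments. Unset Strict Implicit. Unset Printing Implicit Defensive.
Import Order.TTheory GRing.Theory Num.Theory.
Local Open Scope ring_scope.
Local Open Scope classical_set_scope.

Section IRS.
Variables (R : realType) (N K : nat).

Definition sqn (z : R[i]) : R := (complex.Re z) ^+ 2 + (complex.Im z) ^+ 2.

Definition log2 (x : R) : R := ln x / ln 2.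

Definition dotH (v w : 'I_N -> R[i]) : R[i] := \sum_(i < N) (v i)^*%C * w i.

Definition qvec (g h : 'I_N -> R[i]) : 'I_N -> R[i] := fun i => (g i)^*%C * h i.

(* v^H diag(|a_1|^2,...,|a_N|^2) v *)
Definition quad_diag (a v : 'I_N -> R[i]) : R := \sum_(i < N) sqn (a i) * sqn (v i).

Definition sqnorm (v : 'I_N -> R[i]) : R := \sum_(i < N) sqn (v i).

Definition gam (g hr : 'I_N -> R[i]) (hd : R[i]) (s2 sr2 : R) (v : 'I_N -> R[i]) : R :=
  sqn (hd + dotH v (qvec g hr)) / (s2 + sr2 * quad_diag g v).

Variables (g : 'I_N -> R[i]) (hr : 'I_K -> 'I_N -> R[i]) (hd : 'I_K -> R[i])
          (s2 sr2 Pr Tmax : R) (E : 'I_K -> R).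

Definition gamma (k : 'I_K) (v : 'I_N -> R[i]) : R := gam g (hr k) (hd k) s2 sr2 v.

Definition tdma_obj (tau p : 'I_K -> R) (vs : 'I_K -> 'I_N -> R[i]) : R :=
  \sum_(k < K) tau k * log2 (1 + p k * gamma k (vs k)).

Definition tdma_feas (tau p : 'I_K -> R) (vs : 'I_K -> 'I_N -> R[i]) : Prop :=
  [/\ (forall k, tau k * p k <= E k),
      \sum_(k < K) tau k <= Tmax,
      (forall k, 0 <= tau k),
      (forall k, 0 <= p k) &
      (forall k, p k * quad_diag (hr k) (vs k) + sr2 * sqnorm (vs k) <= Pr)].

Definition R_TDMA : \bar R :=
  ereal_sup [set (tdma_obj x.1.1 x.1.2 x.2)%:E |
             x in [set x | tdma_feas x.1.1 x.1.2 x.2]].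

Definition noma_obj (tau : R) (p : 'I_K -> R) (v : 'I_N -> R[i]) : R :=
  tau * log2 (1 + \sum_(k < K) p k * gamma k v).

Definition noma_feas (tau : R) (p : 'I_K -> R) (v : 'I_N -> R[i]) : Prop :=
  [/\ (forall k, tau * p k <= E k),
      tau <= Tmax,
      0 <= tau,
      (forall k, 0 <= p k) &
      \sum_(k < K) p k * quad_diag (hr k) v + sr2 * sqnorm v <= Pr].

Definition R_NOMA : \bar R :=
  ereal_sup [set (noma_obj x.1.1 x.1.2 x.2)%:E |
             x in [set x | noma_feas x.1.1 x.1.2 x.2]].

Definition relax_obj (tau p : 'I_K -> R) (v : 'I_N -> R[i]) : R :=
  \sum_(k < K) tau k * log2 (1 + p k * gamma k v).

Definition relax_feas (tau p : 'I_K -> R) (v : 'I_N -> R[i]) : Prop :=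
  [/\ (forall k, tau k * p k <= E k),
      \sum_(k < K) tau k <= Tmax,
      (forall k, 0 <= tau k) &
      (forall k, 0 <= p k)].

Definition relax_optimal (tau p : 'I_K -> R) (v : 'I_N -> R[i]) : Prop :=
  relax_feas tau p v /\
  forall tau' p' v', relax_feas tau' p' v' -> relax_obj tau' p' v' <= relax_obj tau p v.

End IRS.

(* Main.v *)
Require Import Defs.
From mathcomp Require Import all_boot all_order all_algebra.
From mathcomp Require Import all_classical all_reals all_analysis.
From mathcomp Require Import complex.
From mathcomp Require Import ring lra.
Import Order.TTheory GRing.Theory Num.Theory.
Local Open Scope ring_scope.

Lemma sqn_ge0 (R : realType) (z : R[i]) : 0 <= sqn z.
Proof. by rewrite /sqn addr_ge0 // sqr_ge0. Qed.

Lemma gamma_ge0 (R : realType) (N K : nat)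
  (g : 'I_N -> R[i]) (hr : 'I_K -> 'I_N -> R[i]) (hd : 'I_K -> R[i])
  (s2 sr2 : R) k v : 0 < s2 -> 0 < sr2 -> 0 <= gamma g hr hd s2 sr2 k v.
Proof.
move=> Hs Hr; rewrite /gamma /gam divr_ge0 ?sqn_ge0 //.
apply: addr_ge0; first exact: ltW.
apply: mulr_ge0; first exact: ltW.
by apply: sumr_ge0 => i _; rewrite mulr_ge0 ?sqn_ge0.
Qed.

Theorem theorem1 (R : realType) (N K : nat) (HN : (0 < N)%N) (HK : (0 < K)%N)
  (g : 'I_N -> R[i]) (hr : 'I_K -> 'I_N -> R[i]) (hd : 'I_K -> R[i])
  (s2 sr2 Pr Tmax : R) (E : 'I_K -> R)
  (Hs2 : 0 < s2) (Hsr2 : 0 < sr2) (HPr : 0 < Pr) (HT : 0 < Tmax)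
  (HE : forall k, 0 < E k)
  (tau_b p_b : 'I_K -> R) (v_b : 'I_N -> R[i]) :
  relax_optimal g hr hd s2 sr2 Tmax E tau_b p_b v_b ->
  (forall k, p_b k * quad_diag (hr k) v_b + sr2 * sqnorm v_b <= Pr) ->
  (R_NOMA g hr hd s2 sr2 Pr Tmax E <= R_TDMA g hr hd s2 sr2 Pr Tmax E)%E.
Proof.
move=> [[Hb1 Hb2 Hb3 Hb4] Hopt] HbP.
have Hbt : ((relax_obj g hr hd s2 sr2 tau_b p_b v_b)%:E
           <= R_TDMA g hr hd s2 sr2 Pr Tmax E)%E.
  apply: ereal_sup_ubound.
  exists (tau_b, p_b, fun _ => v_b) => //.
apply: ge_ereal_sup => _ [[[tau p] v] /= [F1 F2 F3 F4 F5] <-].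
apply: le_trans Hbt; rewrite lee_fin.
set x := fun k => p k * gamma g hr hd s2 sr2 k v.
have x0 : forall k, 0 <= x k by move=> k; rewrite mulr_ge0 ?gamma_ge0.
set S := \sum_(k < K) x k.
have S0 : 0 <= S by rewrite sumr_ge0.
have xS : forall k, x k <= S.
  move=> k; rewrite /S (bigD1 k) //= lerDl sumr_ge0 //.
pose t := fun k => tau * x k / S.
pose q := fun k => p k * S / x k.
have Hfeas : relax_feas Tmax E t q v.
  split.
  - move=> k; rewrite /t /q.
    have [->|xk] := eqVneq (x k) 0.
      by rewrite mulr0 mul0r mul0r ltW.
    have SN : S != 0 by apply/negP => /eqP Se; move: (xS k) (x0 k); rewrite Se => a b;
      move: xk; rewrite eq_le a b.
    have -> : tau * x k / S * (p k * S / x k) = tau * p k by field; apply/andP.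
    exact: F1.
  - rewrite /t -mulr_suml -mulr_sumr.
    have [->|SN] := eqVneq S 0; first by rewrite invr0 mulr0 ltW.
    by rewrite -/S -mulrA mulfV // mulr1.
  - by move=> k; apply: divr_ge0 => //; apply: mulr_ge0.
  - by move=> k; apply: divr_ge0 => //; apply: mulr_ge0.
apply: le_trans (Hopt _ _ _ Hfeas).
rewrite /noma_obj /relax_obj -/(x _).
have [S0e|SN] := eqVneq S 0.
  rewrite -/S S0e addr0 /log2 ln1 mul0r mulr0.
  by apply: sumr_ge0 => k _; rewrite /t S0e invr0 mulr0 mul0r lexx.
have -> : \sum_(k < K) t k * log2 (1 + q k * gamma g hr hd s2 sr2 k v)
        = \sum_(k < K) tau * x k / S * log2 (1 + S).
  apply: eq_bigr => k _; rewrite /t /q.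
  have [->|xk] := eqVneq (x k) 0; first by rewrite !mulr0 !mul0r.
  congr (_ * log2 (1 + _)); rewrite /x in xk *; field.
  by move: xk; rewrite mulf_eq0 negb_or andbC.
rewrite -!mulr_suml -mulr_sumr -/S. have -> : tau * S / S = tau by field. by [].
Qed.
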